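(* Let $q$ be a power of the prime $p$ and $n$ a positive integer. Let $f, h, k\in \mathbb{F}_q[x]$ with $k(\mathbb{F}_q)\subseteq\mathbb{F}_q^*$, and let $P(x)=f(\mathrm{Tr}_{q^n/q}(x))+k(\mathrm{Tr}_{q^n/q}(x))\cdot L_h(x)$. Then $P$ is a permutation polynomial of $\mathbb{F}_{q^n}$ if and only if $\gcd\left(h(x), \frac{x^n-1}{x-1}\right)=1$ and $Q(x)=n\cdot f(x)+h(1)k(x)\cdot x$ induces a permutation of $\mathbb{F}_q$. More specifically, $P$ is a permutation polynomial of $\mathbb{F}_{q^n}$ if and only if one of the following holds: (i) $p\mid n$, $\gcd(h(x), x^n-1)=1$, and $k(x)\cdot x$ is a permutation polynomial of $\mathbb{F}_q$; (ii) $p\nmid n$, $\gcd(h(x), x^n-1)=x-1$, and $f$ is a permutation polynomial of $\mathbb{F}_q$; (iii) $p\nmid n$, $\gcd(h(x), x^n-1)=1$, and $n f(x)+h(1)\cdot k(x)\cdot x$ is a permutation polynomial of $\mathbb{F}_q$.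
   Context: For $u(x)=\sum_{i=0}^m a_i x^i\in\mathbb{F}_q[x]$, its linearized $q$-associate is $L_u(x)=\sum_{i=0}^m a_i x^{q^i}$. $\mathrm{Tr}_{q^n/q}(x)=x+x^q+\cdots+x^{q^{n-1}}$. A permutation polynomial of a finite field is a polynomial inducing a bijection of it. *)

(* Defs.v *)
From HB Require Import structures.
From mathcomp Require Import all_boot all_order all_algebra all_field.
Set Implicit Arguments. Unset Strict Implicit. Unset Printing Implicit Defensive.
Import GRing.Theory.
Local Open Scope ring_scope.

(* F plays the role of F_q, L the role of F_{q^n}; iota : F -> L embeds F_q in
   F_{q^n}. Polynomials over F are evaluated on elements of L via iota. *)

Definition trq {L : finFieldType} (q n : nat) (x : L) : L :=
  \sum_(i < n) x ^+ (q ^ i).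

Definition linq {F L : finFieldType} (iota : {rmorphism F -> L}) (q : nat)
  (u : {poly F}) (x : L) : L :=
  \sum_(i < size u) iota u`_i * x ^+ (q ^ i).

Definition is_pp {F : finFieldType} (g : {poly F}) : Prop :=
  bijective (fun x : F => g.[x]).

(* Main.v *)
Require Import Defs.
From HB Require Import structures.
From mathcomp Require Import all_boot all_order all_algebra all_field.
From mathcomp Require abelian pgroup.
Import GRing.Theory.
Local Open Scope ring_scope.

Section S.
Variables (F L : finFieldType) (iota : {rmorphism F -> L}).

Lemma qnat : [pchar L].-nat #|F|.
Proof.
have [r pr /abelian.abelem_pgroup] := elimT (abelian.is_abelemP (G := fingroup.setT_group _)) (finField_is_abelem F).
rewrite pgroup.pgroupE cardsT => rq.
have [k qk] := p_natP rq.
have rF := card_finPcharP qk pr.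
have rL := rmorph_pchar iota rF.
apply: sub_in_pnat rq => s _; rewrite inE => /eqP ->; exact rL.
Qed.

Local Notation q := #|F|.
Local Notation lin := (linq iota q).

Lemma q_gt1 : (1 < q)%N. Proof. exact: card_finNzRing_gt1. Qed.

Lemma powqD i (x y : L) : (x + y) ^+ (q ^ i) = x ^+ (q ^ i) + y ^+ (q ^ i).
Proof. by apply: exprDn_pchar; rewrite pnatX qnat. Qed.

Lemma iota_powq i c : iota c ^+ (q ^ i) = iota c.
Proof.
elim: i => [|i IH]; first by rewrite expn0 expr1.
by rewrite expnSr exprM IH -rmorphXn expf_card.
Qed.

Lemma powqS i (x : L) : x ^+ (q ^ i) ^+ q = x ^+ (q ^ i.+1).
Proof. by rewrite -exprM expnSr. Qed.

Lemma powSq i (x : L) : (x ^+ q) ^+ (q ^ i) = x ^+ (q ^ i.+1).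
Proof. by rewrite -exprM expnS. Qed.

Lemma linE (u : {poly F}) (x : L) N : (size u <= N)%N ->
  lin u x = \sum_(i < N) iota u`_i * x ^+ (q ^ i).
Proof.
move=> uN; rewrite /linq (big_ord_widen N (fun i => iota u`_i * x ^+ (q ^ i)) uN).
rewrite big_mkcond; apply: eq_bigr => i _; case: ifP => // /negbT.
by rewrite -leqNgt => /(nth_default 0) ->; rewrite rmorph0 mul0r.
Qed.

Lemma lin0 (x : L) : lin 0 x = 0.
Proof. by rewrite /linq size_poly0 big_ord0. Qed.

Lemma linD (u v : {poly F}) (x : L) : lin (u + v) x = lin u x + lin v x.
Proof.
set N := maxn (size u) (size v).
rewrite !(@linE _ _ N) ?leq_maxl ?leq_maxr ?size_polyD //.
by rewrite -big_split; apply: eq_bigr => i _; rewrite coefD rmorphD mulrDl.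
Qed.

Lemma linC c (v : {poly F}) (x : L) : lin (c%:P * v) x = iota c * lin v x.
Proof.
rewrite !(@linE _ _ (size v)) // ?mul_polyC ?size_scale_leq //.
by rewrite mulr_sumr; apply: eq_bigr => i _; rewrite coefZ rmorphM mulrA.
Qed.

Lemma linN (u : {poly F}) (x : L) : lin (- u) x = - lin u x.
Proof. by rewrite -mulN1r -polyCN linC rmorphN1 mulN1r. Qed.

Lemma linB (u v : {poly F}) (x : L) : lin (u - v) x = lin u x - lin v x.
Proof. by rewrite linD linN. Qed.

Lemma linXl (v : {poly F}) (x : L) : lin ('X * v) x = lin v (x ^+ q).
Proof.
have sz : (size ('X * v)%R <= (size v).+1)%N.
  by apply: leq_trans (size_polyMleq _ _) _; rewrite size_polyX.
rewrite (linE _ x _ sz) (@linE v _ (size v)) // big_ord_recl coefXM /= rmorph0 mul0r add0r.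
by apply: eq_bigr => i _; rewrite coefXM /= powSq.
Qed.

Lemma linXr (v : {poly F}) (x : L) : lin ('X * v) x = (lin v x) ^+ q.
Proof.
rewrite linXl /linq.
have hm : forall a b : L, (a + b) ^+ q = a ^+ q + b ^+ q.
  by move=> a b; have := powqD 1 a b; rewrite expn1.
have h0 : (0 : L) ^+ q = 0 by rewrite expr0n eqn0Ngt (ltn_trans _ q_gt1).
rewrite (big_morph (fun y => y ^+ q) hm h0).
by apply: eq_bigr => i _; rewrite exprMn powSq -powqS -rmorphXn expf_card.
Qed.

Lemma lin1 (x : L) : lin 1 x = x.
Proof. by rewrite /linq size_poly1 big_ord1 coefC /= rmorph1 mul1r expn0 expr1. Qed.

Lemma linM (u v : {poly F}) (x : L) : lin (u * v) x = lin u (lin v x).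
Proof.
elim/poly_ind: u v x => [|u c IH] v x; first by rewrite mul0r !lin0.
rewrite mulrDl -mulrA linD IH (linC c v x) linD -[c%:P]mulr1 linC lin1 linXr.
by rewrite (mulrC u 'X) linXl.
Qed.

Lemma linXn i (x : L) : lin 'X^i x = x ^+ (q ^ i).
Proof.
elim: i => [|i IH]; first by rewrite expr0 lin1 expn0 expr1.
by rewrite exprS linXr IH powqS.
Qed.

Lemma linxD (u : {poly F}) (x y : L) : lin u (x + y) = lin u x + lin u y.
Proof.
rewrite /linq -big_split; apply: eq_bigr => i _.
by rewrite powqD mulrDr.
Qed.

Lemma linx0 (u : {poly F}) : lin u 0 = 0.
Proof.
have h := linxD u 0 0; rewrite addr0 in h.
by apply: (addrI (lin u 0)); rewrite addr0 -h.
Qed.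

Lemma linxN (u : {poly F}) (x : L) : lin u (- x) = - lin u x.
Proof.
by apply/eqP; rewrite -subr_eq0 opprK -linxD addNr linx0.
Qed.

Lemma linxB (u : {poly F}) (x y : L) : lin u (x - y) = lin u x - lin u y.
Proof. by rewrite linxD linxN. Qed.

Lemma linxM (u : {poly F}) c (x : L) : lin u (iota c * x) = iota c * lin u x.
Proof.
rewrite /linq mulr_sumr; apply: eq_bigr => i _.
by rewrite exprMn iota_powq mulrCA.
Qed.

Lemma lin_iota (u : {poly F}) a : lin u (iota a) = iota u.[1] * iota a.
Proof.
rewrite /linq horner_coef rmorph_sum mulr_suml; apply: eq_bigr => i _.
by rewrite iota_powq expr1n mulr1.
Qed.

Lemma card_pow : (#|L| = q ^ 1)%N -> True. Proof. by []. Qed.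


Lemma fixed_iota (y : L) : y ^+ q = y -> exists a, y = iota a.
Proof.
move=> yq; case: (boolP [exists a, y == iota a]) => [/existsP [a /eqP ->]|]; first by exists a.
rewrite negb_exists => /forallP ny.
pose rs := y :: map iota (enum F).
have sz : size ('X^q - 'X : {poly L}) = q.+1.
  by rewrite size_polyDl ?size_polyXn ?size_polyN ?size_polyX ?ltnS ?q_gt1.
have nz : ('X^q - 'X : {poly L}) != 0 by rewrite -size_poly_eq0 sz.
suff [h1 h2] : all (root ('X^q - 'X)) rs /\ uniq rs.
  by have := max_poly_roots nz h1 h2; rewrite sz /= size_map -cardE ltnn.
split.
- apply/allP => z; rewrite inE => /orP [/eqP ->|/mapP [a _ ->]].
    by rewrite rootE !hornerE yq subrr.
  by rewrite rootE !hornerE -rmorphXn expf_card subrr.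
- rewrite /= map_inj_uniq ?enum_uniq ?andbT; last exact: fmorph_inj.
  by apply/mapP => -[a _ ya]; have := ny a; rewrite ya eqxx.
Qed.

Variable n : nat.
Hypothesis n_gt0 : (0 < n)%N.
Hypothesis cardL : #|L| = (q ^ n)%N.

Lemma powqn (x : L) : x ^+ (q ^ n) = x.
Proof. by rewrite -cardL expf_card. Qed.

Lemma linXn1 (x : L) : lin ('X ^+ n - 1) x = 0.
Proof. by rewrite linB linXn lin1 powqn subrr. Qed.

Definition gpol : {poly F} := \sum_(i < n) 'X ^+ i.

Lemma gpolE : ('X ^+ n - 1) %/ ('X - 1) = gpol.
Proof.
by rewrite subrX1 mulrC mulpK // -polyC1 polyXsubC_eq0.
Qed.

Lemma lin_sum I (r : seq I) (P : pred I) (G : I -> {poly F}) (x : L) :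
  lin (\sum_(i <- r | P i) G i) x = \sum_(i <- r | P i) lin (G i) x.
Proof.
by apply: (big_morph (fun u => lin u x)) => [u v|]; rewrite ?linD ?lin0.
Qed.

Lemma trE (x : L) : trq q n x = lin gpol x.
Proof.
by rewrite lin_sum /trq; apply: eq_bigr => i _; rewrite linXn.
Qed.

Lemma tr_fixed (x : L) : (trq q n x) ^+ q = trq q n x.
Proof.
have e : 'X * gpol = gpol + ('X ^+ n - 1).
  by rewrite subrX1 mulrBl mul1r addrC subrK.
by rewrite trE -linXr e linD linXn1 addr0.
Qed.


Lemma lin_nonvanish (e : {poly F}) : e != 0 -> (size e <= n)%N ->
  exists y, lin e y != 0.
Proof.
move=> enz se.
case: (boolP [exists y, lin e y != 0]) => [/existsP [y hy]|]; first by exists y.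
rewrite negb_exists => /forallP /= hall.
pose d := (size e).-1.
have sgt0 : (0 < size e)%N by rewrite size_poly_gt0.
have dlt : (d < size e)%N by rewrite /d prednK.
pose E : {poly L} := \sum_(i < size e) iota e`_i *: 'X^(q ^ i).
have Ey : forall y, E.[y] = lin e y.
  by move=> y; rewrite /E horner_sum; apply: eq_bigr => i _; rewrite hornerZ hornerXn.
have coefE : forall j, E`_j = \sum_(i < size e) iota e`_i * (j == (q ^ i)%N)%:R.
  by move=> j; rewrite /E coef_sum; apply: eq_bigr => i _; rewrite coefZ coefXn.
have sE : (size E <= (q ^ d).+1)%N.
  apply/leq_sizeP => j hj; rewrite coefE big1 // => i _.
  have : (q ^ i <= q ^ d)%N by rewrite leq_pexp2l ?(ltn_trans _ q_gt1) // -ltnS /d prednK.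
  by move=> hi; rewrite (gtn_eqF (leq_ltn_trans hi hj)) mulr0.
have E0 : E != 0.
  apply/eqP => /(congr1 (fun P : {poly L} => P`_(q ^ d)%N)); rewrite coef0 coefE.
  rewrite (bigD1 (Ordinal dlt)) //= eqxx mulr1 big1 ?addr0.
    by move/eqP; rewrite fmorph_eq0 -lead_coefE lead_coef_eq0 (negbTE enz).
  move=> i /eqP ne; rewrite eqn_exp2l ?q_gt1 //.
  case: eqP => [di|]; last by rewrite mulr0.
  by exfalso; apply: ne; apply: val_inj; rewrite /= di.
have := max_poly_roots E0 (rs := enum L).
rewrite enum_uniq => /(_ _ isT) h.
have : (size (enum L) < size E)%N.
  apply: h; apply/allP => y _; rewrite rootE Ey; exact: negbNE (hall y).
rewrite -cardE cardL => /leq_trans /(_ sE); rewrite ltnS leq_exp2l ?q_gt1 //.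
by rewrite leqNgt -ltnS /d prednK // ltnS se.
Qed.


Lemma gpol_mul : ('X - 1) * gpol = 'X ^+ n - 1.
Proof. by rewrite subrX1. Qed.

Lemma gpol_size : size gpol = n.
Proof.
have h1 : size (('X - 1) * gpol) = n.+1 by rewrite gpol_mul size_Xn_sub_1.
have gnz : gpol != 0.
  by apply/eqP => g0; move: h1; rewrite g0 mulr0 size_poly0.
move: h1; rewrite size_mul ?gnz // -?polyC1 ?polyXsubC_eq0 // size_XsubC.
by case.
Qed.

Lemma gpol_neq0 : gpol != 0.
Proof. by rewrite -size_poly_eq0 gpol_size -lt0n. Qed.

Lemma gpol1 : gpol.[1] = n%:R.
Proof.
rewrite /gpol horner_sum (eq_bigr (fun _ => 1)) => [|i _]; last by rewrite hornerXn expr1n.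
by rewrite sumr_const card_ord.
Qed.

Lemma tr_img (x : L) : exists a, trq q n x = iota a.
Proof. exact/fixed_iota/tr_fixed. Qed.

Lemma tr_surj a : exists x, trq q n x = iota a.
Proof.
have [y hy] := @lin_nonvanish gpol gpol_neq0 (eq_leq gpol_size).
have [c hc] := tr_img y.
rewrite -trE hc fmorph_eq0 in hy.
exists (iota (a / c) * y).
by rewrite !trE linxM -trE hc -rmorphM divfK.
Qed.

Lemma surj_bij_fin (T : finType) (g : T -> T) :
  (forall b, exists a, g a = b) -> bijective g.
Proof.
move=> gs.
have gs' : forall b, [exists a, g a == b] by move=> b; have [a ha] := gs b; apply/existsP; exists a; rewrite ha.
pose inv b := odflt b [pick a | g a == b].
have invK : cancel inv g.
  move=> b; rewrite /inv; case: pickP => [a /eqP //|/= none].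
  by have /existsP [a ha] := gs' b; move: (none a); rewrite ha.
have invb : bijective inv by apply: injF_bij; exact: can_inj invK.
exists inv => // a.
case: invb => ig h1 h2.
by rewrite -(h2 a) invK.
Qed.

Section Main.
Variables (f h k : {poly F}).
Hypothesis knz : forall x, k.[x] != 0.

Let P := fun x : L =>
    (map_poly iota f).[trq q n x] + (map_poly iota k).[trq q n x] * linq iota q h x.
Let Qp := f *+ n + h.[1] *: (k * 'X).

Lemma P_at x a : trq q n x = iota a -> P x = iota f.[a] + iota k.[a] * lin h x.
Proof. by move=> hx; rewrite /P hx !horner_map. Qed.

Lemma TP x a : trq q n x = iota a -> trq q n (P x) = iota Qp.[a].
Proof.
move=> hx; rewrite (P_at x a hx) trE linxD linxM lin_iota gpol1 -linM (mulrC gpol h) linM -trE hx.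
rewrite lin_iota /Qp hornerD hornerMn hornerZ hornerM hornerX.
rewrite rmorphD rmorphMn !rmorphM rmorph1 mulrnAl mul1r rmorphMn.
by rewrite mulrCA.
Qed.


Lemma P0 z : trq q n z = 0 -> lin h z = 0 -> P z = P 0.
Proof.
move=> tz hz; rewrite /P tz hz trE linx0 linx0.
by [].
Qed.

Lemma main1 : bijective P <->
  coprimep h (('X ^+ n - 1) %/ ('X - 1)) /\ is_pp Qp.
Proof.
rewrite gpolE; split.
- move=> [Pinv PK KP]; split.
  + apply/idPn => ncop.
    set d := gcdp h gpol.
    have dnz : d != 0 by rewrite gcdp_eq0 negb_and gpol_neq0 orbT.
    have dsz : (1 < size d)%N.
      move: ncop; rewrite coprimep_def -/d; move: dnz; rewrite -size_poly_eq0.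
      by case: (size d) => [|[|m]].
    have dX : d %| 'X ^+ n - 1 by rewrite -gpol_mul dvdp_mull // dvdp_gcdr.
    set e := ('X ^+ n - 1) %/ d.
    have ed : e * d = 'X ^+ n - 1 by rewrite divpK.
    have Xnz : ('X ^+ n - 1 : {poly F}) != 0 by rewrite -size_poly_eq0 size_Xn_sub_1.
    have enz : e != 0 by apply/eqP => e0; move: Xnz; rewrite -ed e0 mul0r eqxx.
    have esz : (size e <= n)%N.
      have : size (e * d) = n.+1 by rewrite ed size_Xn_sub_1.
      rewrite size_mul //.
      by move: dsz; case: (size d) => [|[|m]] //= _; rewrite addnS /= addnS => -[] <-; rewrite leq_addr.
    have [y hy] := @lin_nonvanish e enz esz.
    set z := lin e y.
    have dz : lin d z = 0 by rewrite /z -linM mulrC ed linXn1.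
    have hz : lin h z = 0 by rewrite -(divpK (dvdp_gcdl h gpol)) linM dz linx0.
    have tz : trq q n z = 0 by rewrite trE -(divpK (dvdp_gcdr h gpol)) linM dz linx0.
    have := P0 z tz hz => /(congr1 Pinv); rewrite !PK => z0.
    by move: hy; rewrite -/z z0 eqxx.
  + apply: surj_bij_fin => b.
    have [w hw] := tr_surj b.
    have [a ha] := tr_img (Pinv w).
    exists a; apply: (fmorph_inj iota).
    by rewrite -(TP _ _ ha) KP.
- move=> [cop [Qinv QK KQ]].
  apply: injF_bij => x y Pxy.
  have [a ha] := tr_img x; have [b hb] := tr_img y.
  have ab : a = b.
    have := TP _ _ ha; rewrite Pxy (TP _ _ hb) => /(fmorph_inj iota) /(congr1 Qinv).
    by rewrite !QK.
  subst b.
  move: Pxy; rewrite (P_at x a ha) (P_at y a hb) => /addrI /mulfI.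
  rewrite fmorph_eq0 knz => /(_ isT) hxy.
  apply: subr0_eq; set z := x - y.
  have hz : lin h z = 0 by rewrite linxB hxy subrr.
  have tz : lin gpol z = 0 by rewrite linxB -!trE ha hb subrr.
  case/Bezout_coprimepP: cop => [[u v]] /= /eqpf_eq [c cnz].
  move/(congr1 (fun r => lin r z)); rewrite linD !linM hz tz !linx0 addr0.
  rewrite alg_polyC -[c%:P]mulr1 linC lin1 => /esym /eqP.
  by rewrite mulf_eq0 fmorph_eq0 (negbTE cnz) => /eqP.
Qed.

End Main.

Lemma pp_inj (r : {poly F}) : is_pp r <-> injective (fun x => r.[x]).
Proof. by split => [/bij_inj|/injF_bij]. Qed.

Lemma pp_scale c (r : {poly F}) : c != 0 -> (is_pp (c *: r) <-> is_pp r).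
Proof.
move=> cnz; split => /pp_inj hi; apply/pp_inj => x y /= hxy; apply: hi => /=.
  by rewrite !hornerZ hxy.
by move: hxy; rewrite !hornerZ => /(mulfI cnz).
Qed.

Lemma pp_scale0 (r : {poly F}) : ~ is_pp (0 *: r).
Proof.
rewrite scale0r => /pp_inj hi.
have := hi 0 1; rewrite !horner0 => /(_ erefl) /eqP; by rewrite eq_sym oner_eq0.
Qed.

Lemma coprime_full (h : {poly F}) :
  coprimep h ('X ^+ n - 1) = (h.[1] != 0) && coprimep h gpol.
Proof. by rewrite -gpol_mul coprimepMr -polyC1 coprimep_XsubC rootE. Qed.

Lemma part2 p (f h k : {poly F}) : p \in [pchar F] ->
  (coprimep h gpol /\ is_pp (f *+ n + h.[1] *: (k * 'X))) <->
     [\/ [/\ (p %| n)%N, coprimep h ('X ^+ n - 1) & is_pp (k * 'X)],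
         [/\ ~~ (p %| n)%N, gcdp h ('X ^+ n - 1) %= 'X - 1 & is_pp f]
       | [/\ ~~ (p %| n)%N, coprimep h ('X ^+ n - 1) &
             is_pp (f *+ n + h.[1] *: (k * 'X))]].
Proof.
move=> pF; rewrite coprime_full (dvdn_pcharf pF).
have Q0 : forall c : F, c = 0 -> f *+ n + c *: (k * 'X) = (n%:R : F) *: f.
  by move=> c ->; rewrite scale0r addr0 scaler_nat.
case: (eqVneq (n%:R : F) 0) => [n0|nn0].
- have -> : f *+ n = 0 by rewrite -scaler_nat n0 scale0r.
  rewrite add0r; split.
  + move=> [cop pq].
    have h1 : h.[1] != 0 by apply/eqP => h0; move: pq; rewrite h0; apply: pp_scale0.
    by apply: Or31; split => //; [rewrite h1 | apply/(pp_scale _ _ h1)].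
  + case=> [[_ /andP [h1 cop] pk]|[]|[]] //.
    by split => //; apply/(pp_scale _ _ h1).
- case: (eqVneq h.[1] 0) => [h0|h1].
  + have ppE := pp_scale _ f nn0; rewrite -(Q0 _ h0) in ppE.
    have dh : ('X - 1) %| h by rewrite -polyC1 dvdp_XsubCl rootE h0.
    set h' := h %/ ('X - 1).
    have eh : h = h' * ('X - 1) by rewrite divpK.
    have Xnz : ('X - 1 : {poly F}) != 0 by rewrite -polyC1 polyXsubC_eq0.
    have gcdE : (gcdp h ('X ^+ n - 1) %= 'X - 1) = coprimep h gpol.
      rewrite eh -gpol_mul (mulrC _ gpol) -[X in _ %= X]mul1r.
      rewrite -(eqp_ltrans (mulp_gcdl h' gpol ('X - 1))) (eqp_mul2r _ _ Xnz) gcdp_eqp1.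
      rewrite coprimepMl [coprimep ('X - 1) _]coprimep_sym -polyC1 coprimep_XsubC rootE gpol1.
      by rewrite nn0 andbT.
    split.
    * by move=> [cop pf]; apply: Or32; split => //; [rewrite gcdE | apply/ppE].
    * by case=> [[]|[_ g pf]|[]] //; split; [rewrite -gcdE | apply/ppE].
  + rewrite /=; split.
    * by move=> [cop pq]; apply: Or33.
    * case=> [[]|[_ g pf]|[_ cop pq]] //.
      have : ('X - 1) %| h.
        by apply: dvdp_trans (dvdp_gcdl h ('X ^+ n - 1)); rewrite (eqp_dvdr _ g) dvdpp.
      by rewrite -polyC1 dvdp_XsubCl rootE (negbTE h1).
Qed.

End S.

Theorem corollary3p3 (F L : finFieldType) (iota : {rmorphism F -> L})
  (p n : nat) (f h k : {poly F}) :
  p \in [pchar F] -> (0 < n)%N -> #|L| = (#|F| ^ n)%N ->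
  (forall x : F, k.[x] != 0) ->
  let q := #|F| in
  let P := fun x : L =>
    (map_poly iota f).[trq q n x] + (map_poly iota k).[trq q n x] * linq iota q h x in
  (bijective P <->
     coprimep h (('X ^+ n - 1) %/ ('X - 1)) /\
     is_pp (f *+ n + h.[1] *: (k * 'X)))
  /\
  (bijective P <->
     [\/ [/\ (p %| n)%N, coprimep h ('X ^+ n - 1) & is_pp (k * 'X)],
         [/\ ~~ (p %| n)%N, gcdp h ('X ^+ n - 1) %= 'X - 1 & is_pp f]
       | [/\ ~~ (p %| n)%N, coprimep h ('X ^+ n - 1) &
             is_pp (f *+ n + h.[1] *: (k * 'X))]]).
Proof.
move=> pF n_gt0 cardL knz q P.
have M1 := @main1 F L iota n n_gt0 cardL f h k knz.
have M2 := @part2 F n p f h k pF.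
split; first exact: M1.
rewrite gpolE in M1.
by split => H; [apply/M2/M1 | apply/M1/M2].
Qed.
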